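(* Let $\mathbb{K}\in\{\mathbb{R},\mathbb{C}\}$, $\star\in\{*,T\}$, $\epsilon_1,\epsilon_2\in\{1,-1\}$, and let $Q(\lambda)=\lambda^2M+\lambda D+K\in\mathbb{K}^{n\times n}[\lambda]$ satisfy $M^\star=\epsilon_1M$, $D^\star=\epsilon_2D$, $K^\star=\epsilon_1K$. Let $(X_j,\Lambda_j)\in\mathbb{K}^{n\times p_j}\times\mathbb{K}^{p_j\times p_j}$, $j\in\{1,2\}$, be invariant pairs of $Q(\lambda)$, and set $S_{jk}:=X_j^\star MX_k\Lambda_k+\epsilon_1\epsilon_2\Lambda_j^\star X_j^\star MX_k+X_j^\star DX_k$ for $j,k\in\{1,2\}$. Then: (a) $\lambda_0\in\mathbb{C}$ is an eigenvalue of $Q(\lambda)$ (i.e. $\det(\lambda_0^2M+\lambda_0D+K)=0$) if and only if $\epsilon_1\epsilon_2\lambda_0^\star$ is an eigenvalue of $Q(\lambda)$; (b) $S_{jk}\Lambda_k=\epsilon_1\epsilon_2\Lambda_j^\star S_{jk}$; (c) $S_{jk}=0$ whenever $\sigma(\epsilon_1\epsilon_2\Lambda_j^\star)\cap\sigma(\Lambda_k)=\emptyset$.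
   Context: For a matrix $A$, $A^*$ is the conjugate transpose and $A^T$ the transpose; $A^\star$ means $A^*$ if $\star=*$ and $A^T$ if $\star=T$. For $\lambda\in\mathbb{C}$, $\lambda^\star=\overline{\lambda}$ if $\star=*$ and $\lambda^\star=\lambda$ if $\star=T$. $\sigma(A)$ is the spectrum. A pair $(X,\Lambda)\in\mathbb{K}^{n\times p}\times\mathbb{K}^{p\times p}$ is an invariant pair of $Q(\lambda)$ if $MX\Lambda^2+DX\Lambda+KX=0$. *)

(* Defs.v *)
From mathcomp Require Import all_boot all_order all_algebra.
From mathcomp Require Import complex reals.
Set Implicit Arguments. Unset Strict Implicit. Unset Printing Implicit Defensive.
Import GRing.Theory Num.Theory.
Local Open Scope ring_scope.

(* The choice of the field K in {R, C}: all data live in C = R[i]; when K = R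
   every entry is required to be real. *)
Inductive field_choice := KR | KC.

Definition inK {R : realType} (k : field_choice) (x : R[i]) : bool :=
  match k with KR => x \is Num.real | KC => true end.

Definition mxK {R : realType} (k : field_choice) {m n : nat} (A : 'M[R[i]]_(m, n)) : Prop :=
  forall i j, inK k (A i j).

Inductive star_choice := SConj | STrans.

Definition mxstar {R : realType} (s : star_choice) {m n : nat}
  (A : 'M[R[i]]_(m, n)) : 'M[R[i]]_(n, m) :=
  match s with SConj => (map_mx Num.conj A)^T | STrans => A^T end.

Definition sstar {R : realType} (s : star_choice) (x : R[i]) : R[i] :=
  match s with SConj => x^* | STrans => x end.

Definition Qeval {R : realType} {n : nat} (M D K : 'M[R[i]]_n) (l : R[i]) : 'M[R[i]]_n :=
  (l ^+ 2) *: M + l *: D + K.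

Definition quad_eigenvalue {R : realType} {n : nat} (M D K : 'M[R[i]]_n) (l : R[i]) : Prop :=
  \det (Qeval M D K l) = 0.

Definition invariant_pair {R : realType} {n p : nat} (M D K : 'M[R[i]]_n)
  (X : 'M[R[i]]_(n, p)) (L : 'M[R[i]]_p) : Prop :=
  M *m X *m (L *m L) + D *m X *m L + K *m X = 0.

Definition Smx {R : realType} (s : star_choice) (e1 e2 : R[i]) {n pj pk : nat}
  (M D : 'M[R[i]]_n) (Xj : 'M[R[i]]_(n, pj)) (Lj : 'M[R[i]]_pj)
  (Xk : 'M[R[i]]_(n, pk)) (Lk : 'M[R[i]]_pk) : 'M[R[i]]_(pj, pk) :=
  mxstar s Xj *m M *m Xk *m Lk + (e1 * e2) *: (mxstar s Lj *m mxstar s Xj *m M *m Xk)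
  + mxstar s Xj *m D *m Xk.

Definition spectra_disjoint {R : realType} {p q : nat} (A : 'M[R[i]]_p) (B : 'M[R[i]]_q) : Prop :=
  forall z : R[i], ~ (eigenvalue A z /\ eigenvalue B z).

Definition bc_conclusions {R : realType} (s : star_choice) (e1 e2 : R[i]) {n pj pk : nat}
  (M D : 'M[R[i]]_n) (Xj : 'M[R[i]]_(n, pj)) (Lj : 'M[R[i]]_pj)
  (Xk : 'M[R[i]]_(n, pk)) (Lk : 'M[R[i]]_pk) : Prop :=
  Smx s e1 e2 M D Xj Lj Xk Lk *m Lk = (e1 * e2) *: (mxstar s Lj *m Smx s e1 e2 M D Xj Lj Xk Lk)
  /\ (spectra_disjoint ((e1 * e2) *: mxstar s Lj) Lk -> Smx s e1 e2 M D Xj Lj Xk Lk = 0).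

(* Main.v *)
Require Import Defs.
From mathcomp Require Import all_boot all_order all_algebra.
From mathcomp Require Import complex reals.
From mathcomp Require Import ring.
Import GRing.Theory Num.Theory.
Local Open Scope ring_scope.
Set Implicit Arguments. Unset Strict Implicit.

Lemma sylv_comm (F : fieldType) p q (A : 'M[F]_p.+1) (B : 'M[F]_q.+1) (S : 'M[F]_(p.+1, q.+1)) :
  S *m B = A *m S -> forall r, S *m horner_mx B r = horner_mx A r *m S.
Proof.
move=> hS; elim/poly_ind => [|r c IH].
  by rewrite !rmorph0 mulmx0 mul0mx.
rewrite !rmorphD !rmorphM /= !horner_mx_X !horner_mx_C -!mulmxE.
rewrite mulmxDr mulmxDl mul_mx_scalar mul_scalar_mx; congr (_ + _).
by rewrite !mulmxA IH -!mulmxA hS.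
Qed.

Lemma sylv0 (F : closedFieldType) p q (A : 'M[F]_p) (B : 'M[F]_q) (S : 'M[F]_(p, q)) :
  S *m B = A *m S -> (forall z, ~ (eigenvalue A z /\ eigenvalue B z)) -> S = 0.
Proof.
case: p A S => [|p] A S; first by rewrite [S]flatmx0.
case: q B S => [|q] B S; first by rewrite [S]thinmx0.
move=> hS hdis.
have cop : coprimep (char_poly A) (char_poly B).
  apply/Pdiv.ClosedField.coprimepP => x rx; apply/negP => rB.
  by apply: (hdis x); rewrite !eigenvalue_root_char.
have [[u v] /= huv] := Bezout_eq1_coprimepP _ _ cop.
have e1 : S = S *m horner_mx B (u * char_poly A + v * char_poly B).
  by rewrite huv rmorph1 mulmx1.
rewrite e1 rmorphD !rmorphM /= Cayley_Hamilton mulr0 addr0 -rmorphM mulrC.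
by rewrite (sylv_comm hS) rmorphM /= Cayley_Hamilton mul0r mul0mx.
Qed.

Section H.
Variable R : realType.
Implicit Types (s : star_choice) (a b : R[i]).
Lemma mxstarD s m n (A B : 'M[R[i]]_(m,n)) : mxstar s (A + B) = mxstar s A + mxstar s B.
Proof. by case: s => /=; rewrite ?map_mxD linearD. Qed.
Lemma mxstarZ s m n a (A : 'M[R[i]]_(m,n)) : mxstar s (a *: A) = sstar s a *: mxstar s A.
Proof. by case: s => /=; rewrite ?map_mxZ linearZ. Qed.
Lemma mxstarM s m n p (A : 'M[R[i]]_(m,n)) (B : 'M[R[i]]_(n,p)) :
  mxstar s (A *m B) = mxstar s B *m mxstar s A.
Proof. by case: s => /=; rewrite ?map_mxM trmx_mul. Qed.
Lemma mxstar0 s m n : mxstar s (0 : 'M[R[i]]_(m,n)) = 0.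
Proof. by case: s => /=; rewrite ?map_mx0 trmx0. Qed.
Lemma mxstar_det s n (A : 'M[R[i]]_n) : \det (mxstar s A) = sstar s (\det A).
Proof. by case: s => /=; rewrite det_tr ?det_map_mx. Qed.
Lemma sstarM s a b : sstar s (a * b) = sstar s a * sstar s b.
Proof. by case: s => //=; rewrite rmorphM. Qed.
Lemma sstarX2 s a : sstar s (a ^+ 2) = sstar s a ^+ 2.
Proof. by case: s => //=; rewrite rmorphXn. Qed.
Lemma sstar_eq0 s a : (sstar s a == 0) = (a == 0).
Proof. by case: s => //=; rewrite conjC_eq0. Qed.
End H.

Lemma aux (V : zmodType) (a b c d x T : V) : a + b + T = 0 -> c + d + T = 0 -> a + x + b = x + c + d.
Proof.
move=> /eqP; rewrite addr_eq0 => /eqP h1 /eqP; rewrite addr_eq0 => /eqP h2.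
by rewrite addrAC h1 -addrA h2 addrC.
Qed.
Section P.
Variables (R : realType) (s : star_choice) (e1 e2 : R[i]) (n : nat) (M D K : 'M[R[i]]_n).
Hypothesis he1 : e1 * e1 = 1.
Hypothesis he2 : e2 * e2 = 1.
Hypothesis hM : mxstar s M = e1 *: M.
Hypothesis hD : mxstar s D = e2 *: D.
Hypothesis hK : mxstar s K = e1 *: K.

Lemma Qstar l : mxstar s (Qeval M D K l) = e1 *: Qeval M D K (e1 * e2 * sstar s l).
Proof.
rewrite /Qeval !mxstarD !mxstarZ hM hD hK sstarX2 !scalerDr !scalerA.
congr (_ + _ + _); congr (_ *: _).
  transitivity (e1 * ((e1*e1)*(e2*e2)) * sstar s l ^+ 2); last by ring.
  by rewrite he1 he2 !mulr1 mulrC.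
transitivity ((e1*e1) * e2 * sstar s l); last by ring.
by rewrite he1 mul1r mulrC.
Qed.

Lemma parta l : quad_eigenvalue M D K l <-> quad_eigenvalue M D K (e1 * e2 * sstar s l).
Proof.
rewrite /quad_eigenvalue; have := Qstar l => /(congr1 determinant).
rewrite mxstar_det detZ => h.
have e1n : e1 ^+ n != 0 by rewrite expf_neq0 //; apply/eqP => e0; move: he1; rewrite e0 mul0r => /eqP; rewrite eq_sym oner_eq0.
split => [H|H]; apply/eqP.
  by move: h; rewrite H; case: s => /=; rewrite ?conjC0 => /esym/eqP; rewrite mulf_eq0 (negPf e1n).
by rewrite -(sstar_eq0 s) h H mulr0.
Qed.

Lemma partb pj pk (Xj : 'M[R[i]]_(n,pj)) Lj (Xk : 'M[R[i]]_(n,pk)) Lk :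
  invariant_pair M D K Xj Lj -> invariant_pair M D K Xk Lk ->
  Smx s e1 e2 M D Xj Lj Xk Lk *m Lk = (e1 * e2) *: (mxstar s Lj *m Smx s e1 e2 M D Xj Lj Xk Lk).
Proof.
move=> hj hk.
have h1 : mxstar s Xj *m M *m Xk *m Lk *m Lk + mxstar s Xj *m D *m Xk *m Lk + mxstar s Xj *m K *m Xk = 0.
  by move: (congr1 (mulmx (mxstar s Xj)) hk); rewrite mulmx0 !mulmxDr !mulmxA.
have h2 : mxstar s Lj *m mxstar s Lj *m mxstar s Xj *m M *m Xk + (e1*e2) *: (mxstar s Lj *m mxstar s Xj *m D *m Xk) + mxstar s Xj *m K *m Xk = 0.
  move: (congr1 (fun A => e1 *: (mxstar s A *m Xk)) hj) => /=.
  rewrite mxstar0 mul0mx scaler0 !mxstarD !mxstarM hM hD hK.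
  rewrite !mulmxDl -!scalemxAr -!scalemxAl !scalerDr !scalerA !mulmxA he1 !scale1r.
  by [].
rewrite /Smx.
rewrite !mulmxDl !mulmxDr -!scalemxAl -!scalemxAr !scalerDr ?scalerA !mulmxA.
have ee : e1*e2*(e1*e2) = 1.
  by transitivity ((e1*e1)*(e2*e2)); [ring | rewrite he1 he2 mulr1].
rewrite ee scale1r; exact: aux h1 h2.
Qed.

Lemma bc pj pk (Xj : 'M[R[i]]_(n,pj)) Lj (Xk : 'M[R[i]]_(n,pk)) Lk :
  invariant_pair M D K Xj Lj -> invariant_pair M D K Xk Lk ->
  bc_conclusions s e1 e2 M D Xj Lj Xk Lk.
Proof.
move=> hj hk; have hb := partb hj hk; split => // hdis.
by apply: sylv0 hdis; rewrite hb scalemxAl.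
Qed.
End P.

Theorem proposition2p2 (R : realType) (k : field_choice) (s : star_choice)
  (e1 e2 : R[i]) (n p1 p2 : nat) (M D K : 'M[R[i]]_n)
  (X1 : 'M[R[i]]_(n, p1)) (L1 : 'M[R[i]]_p1)
  (X2 : 'M[R[i]]_(n, p2)) (L2 : 'M[R[i]]_p2) :
  (e1 = 1 \/ e1 = -1) -> (e2 = 1 \/ e2 = -1) ->
  mxK k M -> mxK k D -> mxK k K ->
  mxK k X1 -> mxK k L1 -> mxK k X2 -> mxK k L2 ->
  mxstar s M = e1 *: M -> mxstar s D = e2 *: D -> mxstar s K = e1 *: K ->
  invariant_pair M D K X1 L1 -> invariant_pair M D K X2 L2 ->
  (forall l0 : R[i],
     quad_eigenvalue M D K l0 <-> quad_eigenvalue M D K (e1 * e2 * sstar s l0))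
  /\ bc_conclusions s e1 e2 M D X1 L1 X1 L1
  /\ bc_conclusions s e1 e2 M D X1 L1 X2 L2
  /\ bc_conclusions s e1 e2 M D X2 L2 X1 L1
  /\ bc_conclusions s e1 e2 M D X2 L2 X2 L2.
Proof.
move=> he1 he2 _ _ _ _ _ _ _ hM hD hK h1 h2.
have e11 : e1 * e1 = 1 by case: he1 => ->; rewrite ?mulrNN mulr1.
have e22 : e2 * e2 = 1 by case: he2 => ->; rewrite ?mulrNN mulr1.
split; first by move=> l0; exact: parta.
have B := bc e11 e22 hM hD hK.
split; first exact (B _ _ _ _ _ _ h1 h1).
split; first exact (B _ _ _ _ _ _ h1 h2).
split; first exact (B _ _ _ _ _ _ h2 h1).
exact (B _ _ _ _ _ _ h2 h2).
Qed.
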